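(* Let $N$ be a finite set of $n$ agents, let $k\in\{0,1,\dots,n\}$ be an integer, and let $j$ be an agent chosen uniformly at random from $N$. Let $\mathrm{OPT}$ and $\mathrm{OPT}'$ denote the optimal liquid welfare of $N$ and of $N\setminus\{j\}$ respectively. Then $$\Pr\Big[\mathrm{OPT}'\ \ge\ \Big(1-\frac{1}{k+1}\Big)\mathrm{OPT}\Big]\ \ge\ 1-\frac{k}{n}.$$
   Context: Each agent $i$ has value $v_i\ge0$ and budget $b_i\ge0$; there is a single divisible item. For an allocation $x$ with $x_i\ge0$, $\sum_i x_i\le1$, the liquid welfare is $\sum_i\min(v_ix_i,b_i)$; the optimal liquid welfare of a set of agents is the maximum of this quantity over all allocations of the item among those agents. *)

(* Defs.v *)
From HB Require Import structures.
From mathcomp Require Import all_boot all_order all_algebra.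
Set Implicit Arguments. Unset Strict Implicit. Unset Printing Implicit Defensive.
Import Order.TTheory GRing.Theory Num.Theory.
Local Open Scope ring_scope.

(* Agents are 'I_n. An allocation of the single divisible item among the
   agents of S is x with x_i >= 0, x_i = 0 outside S, and sum x_i <= 1. *)
Definition feasible_alloc (R : realFieldType) (n : nat) (S : {set 'I_n})
  (x : 'I_n -> R) : Prop :=
  (forall i, 0 <= x i) /\ (forall i, i \notin S -> x i = 0) /\
  \sum_(i < n) x i <= 1.

Definition liquid_welfare (R : realFieldType) (n : nat) (v b x : 'I_n -> R) : R :=
  \sum_(i < n) Num.min (v i * x i) (b i).

Definition is_opt_LW (R : realFieldType) (n : nat) (v b : 'I_n -> R)
  (S : {set 'I_n}) (w : R) : Prop :=
  (exists x, feasible_alloc S x /\ liquid_welfare v b x = w) /\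
  (forall x, feasible_alloc S x -> liquid_welfare v b x <= w).

(* Main.v *)
Require Import Defs.
From HB Require Import structures.
From mathcomp Require Import all_boot all_order all_algebra.
Import Order.TTheory GRing.Theory Num.Theory.
Local Open Scope ring_scope.

Theorem lemma5 (R : realFieldType) (n k : nat) (v b : 'I_n -> R)
  (hv : forall i, 0 <= v i) (hb : forall i, 0 <= b i)
  (hn : (0 < n)%N) (hk : (k <= n)%N)
  (OPT : R) (OPT' : 'I_n -> R)
  (hOPT : is_opt_LW v b [set: 'I_n] OPT)
  (hOPT' : forall j, is_opt_LW v b ([set: 'I_n] :\ j) (OPT' j)) :
  1 - (k%:R : R) / n%:R <=
  #|[set j : 'I_n | (1 - (k.+1%:R)^-1) * OPT <= OPT' j]|%:R / n%:R.
Proof.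
have [[x [[x0 [_ x1]] lwx]] _] := hOPT.
pose c j := Num.min (v j * x j) (b j).
have c0 : forall j, 0 <= c j.
  by move=> j; rewrite /c le_min mulr_ge0 ?hb ?x0 ?hv.
have OPTE : OPT = \sum_(i < n) c i by rewrite -lwx.
have OPT0 : 0 <= OPT by rewrite OPTE sumr_ge0.
have key : forall j, OPT - c j <= OPT' j.
  move=> j; have [_ H] := hOPT' j.
  pose y i := if i == j then 0 else x i.
  have fy : feasible_alloc ([set: 'I_n] :\ j) y.
    split; first by move=> i; rewrite /y; case: eqP => // _; exact: x0.
    split; first by move=> i; rewrite !inE andbT negbK /y => ->.
    apply: le_trans x1; apply: ler_sum => i _; rewrite /y.
    by case: eqP => // _; exact: x0.
  have := H y fy; apply: le_trans; rewrite le_eqVlt; apply/orP; left; apply/eqP.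
  rewrite /liquid_welfare OPTE (bigD1 j) //= [in RHS](bigD1 j) //=.
  rewrite /y eqxx mulr0 /c.
  have -> : Num.min 0 (b j) = 0 by apply/eqP; rewrite eq_le ge_min lexx le_min lexx hb.
  rewrite add0r addrAC subrr add0r; apply: eq_bigr => i /negPf ->; by [].
set G := [set j : 'I_n | _].
have hB : (#|~: G| <= k)%N.
  rewrite leqNgt; apply/negP => Hlt.
  have kpos : (0 : R) < k.+1%:R by rewrite ltr0n.
  have bad : forall j, j \in ~: G -> OPT < k.+1%:R * c j.
    move=> j; rewrite !inE -ltNge => Hj.
    have := le_lt_trans (key j) Hj.
    rewrite mulrBl mul1r ltrD2l ltrN2 => H.
    by move: H; rewrite -(ltr_pM2l kpos) mulrA mulfV ?gt_eqF // mul1r.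
  have ne : has (fun j => j \in ~: G) (index_enum 'I_n).
    have : (0 < #|~: G|)%N by apply: leq_ltn_trans Hlt.
    case/card_gt0P => j0 Hj0; apply/hasP; exists j0 => //; by rewrite mem_index_enum.
  have H1 := ltr_sum ne bad.
  have H2 : \sum_(i | i \in ~: G) k.+1%:R * c i <= k.+1%:R * OPT.
    rewrite -mulr_sumr ler_wpM2l ?ler0n // OPTE [in leRHS](bigID (fun i => i \in ~: G)) /=.
    by rewrite lerDl sumr_ge0.
  have H3 : k.+1%:R * OPT <= \sum_(i | i \in ~: G) OPT.
    rewrite sumr_const -[OPT *+ _]mulr_natl.
    by apply: ler_wpM2r => //; rewrite ler_nat.
  by have := lt_le_trans (lt_le_trans H1 H2) H3; rewrite ltxx.
have hG : (n <= #|G| + k)%N.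
  have := cardsC G; rewrite card_ord => HG.
  by rewrite -[X in (X <= _)%N]HG leq_add2l.
have npos : (0 : R) < n%:R by rewrite ltr0n.
rewrite -(ler_pM2r npos) mulrBl mul1r mulfVK ?gt_eqF // divfK ?gt_eqF //.
by rewrite lerBlDr -natrD ler_nat.
Qed.
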